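(* Let $n\ge 3$, let $[\mathcal Q:\xi]$, $[\mathcal H:\partial]$, $[\mathcal G:\delta]$ be reduced $n$-crossed complexes, let $p:\mathcal Q\to\mathcal H$ be a trivial fibration and $f:\mathcal Q\to\mathcal G$ any morphism of reduced $n$-crossed complexes, and let $\nabla^f=(p,f):\mathcal Q\to\mathcal H\times\mathcal G$ be the induced diagonal morphism. Then the canonical morphism $\iota:\mathcal Q\to\mathcal Q^{\nabla^f_n}$ into the $n$-pushout is a weak equivalence, i.e. it induces isomorphisms $\pi_k(\mathcal Q)\to\pi_k(\mathcal Q^{\nabla^f_n})$ for all $1\le k\le n$.
   Context: A reduced $n$-crossed complex $[C:\partial]$ is a sequence of groups and homomorphisms $C_n\xrightarrow{\partial_n}C_{n-1}\to\cdots\to C_2\xrightarrow{\partial_2}C_1$ together with an action of $C_1$ on each $C_k$ ($k\ge2$), written $c\mapsto c^a$, such that $\partial_2:C_2\to C_1$ is a crossed module, $C_k$ is abelian for $k\ge3$, each $\partial_k$ is $C_1$-equivariant ($C_1$ acting on itself by conjugation), $\partial_{k-1}\partial_k$ is trivial, and $\partial_2(C_2)$ acts trivially on $C_k$ for $k\ge3$. Morphisms are families of homomorphisms commuting with the differentials and compatible with the actions; products are taken degreewise. Homotopy groups: $\pi_1(C)=C_1/\partial_2(C_2)$, $\pi_k(C)=\ker\partial_k/\partial_{k+1}(C_{k+1})$ for $2\le k\le n-1$, $\pi_n(C)=\ker\partial_n$. A weak equivalence is a morphism inducing isomorphisms on all $\pi_k$, $1\le k\le n$; a fibration is a morphism surjective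 in every degree; a trivial fibration is both. Recall (proved in the paper) that a morphism $p:[\mathcal Q:\xi]\to[\mathcal H:\partial]$ is a trivial fibration iff for each $1\le k\le n$ the map $u_k:\mathcal Q_k\to\ker\xi_{k-1}\times_{\ker\partial_{k-1}}\mathcal H_k$, $x\mapsto(\xi_k(x),p_k(x))$, is surjective for $k<n$ and bijective for $k=n$; here the target is the fibre product of $p_{k-1}:\ker\xi_{k-1}\to\ker\partial_{k-1}$ and $\partial_k:\mathcal H_k\to\ker\partial_{k-1}$, with conventions $\ker\xi_0=\ker\partial_0=1$ and $\ker\xi_1=\mathcal Q_1$, $\ker\partial_1=\mathcal H_1$. The $n$-pushout: given a morphism $\nabla:[\mathcal Q:\xi]\to[\mathcal K:\kappa]$ (here $\mathcal K=\mathcal H\times\mathcal G$, $\nabla=\nabla^f=(p,f)$), $\mathcal Q^{\nabla_n}$ is the reduced $n$-crossed complex equal to $\mathcal Q$ in degrees $\le n-2$, with degree $n$ group $\mathcal K_n$ and degree $n-1$ group $P=\mathcal Q_{n-1}\times^{\mathcal Q_n}\mathcal K_n$, the pushout of $\xi_n:\mathcal Q_n\to\mathcal Q_{n-1}$ and $\nabla_n:\mathcal Q_n\to\mathcal K_n$: the quotient of the (semi)direct product $\mathcal Q_{n-1}\ltimes\mathcal K_n$ (for $n=3$, $\mathcal Q_2$ acts on $\mathcal K_3$ via $\nabla_1\circ\xi_2$ and the $\mathcal K_1$-action; for $n\ge4$ the product is direct) by the normal subgroup of elements $(\xi_n(x)^{-1},\nabla_n(x))$, $x\in\mathcal Q_n$.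 Elements of $P$ are written $[a,(b,c)]$. The differentials are $i_2:\mathcal K_n\to P$, $(b,c)\mapsto[1,(b,c)]$, and $P\to\mathcal Q_{n-2}$, $[a,(b,c)]\mapsto\xi_{n-1}(a)$. The canonical morphism $\iota:\mathcal Q\to\mathcal Q^{\nabla_n}$ is $\nabla_n$ in degree $n$, $a\mapsto[a,(1,1)]$ in degree $n-1$, and the identity below; the canonical morphism $\rho:\mathcal Q^{\nabla_n}\to\mathcal K$ is the identity in degree $n$, $[a,(b,c)]\mapsto\nabla_{n-1}(a)\kappa_n(b,c)$ in degree $n-1$, and $\nabla_k$ in degrees $k\le n-2$; thus $\rho\circ\iota=\nabla$. *)

(* Defs.v *)
(* Data and axioms are kept separate so
   that constructions (products, semidirect products, quotients, the
   n-pushout) are definable on raw data; the axioms are stated as Props. *)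
From Stdlib Require Import ClassicalEpsilon.
From mathcomp Require Import ssreflect ssrfun ssrbool eqtype ssrnat.

Set Implicit Arguments.
Unset Strict Implicit.
Unset Printing Implicit Defensive.

Record group := Group {
  gcar :> Type;
  gmul : gcar -> gcar -> gcar;
  gone : gcar;
  ginv : gcar -> gcar }.
Arguments gmul {g}.
Arguments gone {g}.
Arguments ginv {g}.

Definition is_group (G : group) : Prop :=
  [/\ (forall x y z : G, gmul x (gmul y z) = gmul (gmul x y) z),
      (forall x : G, gmul gone x = x),
      (forall x : G, gmul x gone = x),
      (forall x : G, gmul (ginv x) x = gone)
    & (forall x : G, gmul x (ginv x) = gone)].

Definition is_hom (G H : group) (f : G -> H) : Prop :=
  forall x y : G, f (gmul x y) = gmul (f x) (f y).

Definition is_abelian (G : group) : Prop :=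
  forall x y : G, gmul x y = gmul y x.

Definition prod_group (G H : group) : group :=
  @Group (G * H)%type
    (fun x y => (gmul x.1 y.1, gmul x.2 y.2))
    (gone, gone)
    (fun x => (ginv x.1, ginv x.2)).

Definition is_normal_subgroup (G : group) (M : G -> Prop) : Prop :=
  [/\ M gone,
      (forall x y, M x -> M y -> M (gmul x y)),
      (forall x, M x -> M (ginv x))
    & (forall x g, M x -> M (gmul (ginv g) (gmul x g)))].

Definition normal_closure (G : group) (S : G -> Prop) : G -> Prop :=
  fun z => forall M : G -> Prop, is_normal_subgroup M ->
             (forall s, S s -> M s) -> M z.

Definition qrel (G : group) (N : G -> Prop) (x y : G) : Prop :=
  N (gmul (ginv x) y).
Definition qcar (G : group) (N : G -> Prop) : Type :=
  {c : G -> Prop | exists x, c = qrel N x}.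
Definition qcls (G : group) (N : G -> Prop) (x : G) : qcar N :=
  exist _ (qrel N x) (ex_intro _ x erefl).
Definition qrepr (G : group) (N : G -> Prop) (c : qcar N) : G :=
  proj1_sig (constructive_indefinite_description _ (proj2_sig c)).
Definition quot_group (G : group) (N : G -> Prop) : group :=
  @Group (qcar N)
    (fun c d => qcls N (gmul (qrepr c) (qrepr d)))
    (qcls N gone)
    (fun c => qcls N (ginv (qrepr c))).

(* Reduced n-crossed complexes (data), with n = d + 2.                 *)
(* Degrees are indexed TOP-DOWN: grp i = C_(n-i), for 0 <= i <= d+1,   *)
(* so grp 0 = C_n, grp d = C_2, grp d.+1 = C_1.                        *)
(*   dif i : C_(n-i) -> C_(n-i-1)  is  the differential  ∂_(n-i)       *)
(*           (meaningful for i <= d, i.e. ∂_k with 2 <= k <= n);       *)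
(*   act i c a = c^a, the (right) action of a ∈ C_1 on c ∈ C_(n-i)     *)
(*           (meaningful for i <= d, i.e. on C_k with k >= 2).         *)
(* Values outside these ranges are irrelevant junk.                    *)

Record rcc (d : nat) := RCC {
  grp : nat -> group;
  dif : forall i, grp i -> grp i.+1;
  act : forall i, grp i -> grp d.+1 -> grp i }.
Arguments grp {d} r i.
Arguments dif {d} r i _.
Arguments act {d} r i _ _.

Record is_rcc (d : nat) (C : rcc d) : Prop := {
  rcc_group : forall i, i <= d.+1 -> is_group (grp C i);
  rcc_dif_hom : forall i, i <= d -> is_hom (dif C i);
  rcc_act_hom : forall i a, i <= d -> is_hom (fun c => act C i c a);
  rcc_act_one : forall i c, i <= d -> act C i c gone = c;
  rcc_act_mul : forall i c a b, i <= d ->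
      act C i c (gmul a b) = act C i (act C i c a) b;
  rcc_xmod_equiv : forall (c : grp C d) (a : grp C d.+1),
      dif C d (act C d c a) = gmul (ginv a) (gmul (dif C d c) a);
  rcc_xmod_peiffer : forall c c' : grp C d,
      act C d c' (dif C d c) = gmul (ginv c) (gmul c' c);
  rcc_abelian : forall i, i < d -> is_abelian (grp C i);
  rcc_dif_equiv : forall i c a, i < d ->
      dif C i (act C i c a) = act C i.+1 (dif C i c) a;
  rcc_difdif : forall i c, i < d -> dif C i.+1 (dif C i c) = gone;
  rcc_triv_act : forall i c x, i < d -> act C i c (dif C d x) = c }.

Definition rmor (d : nat) (C D : rcc d) := forall i, grp C i -> grp D i.

Definition is_rmor (d : nat) (C D : rcc d) (f : rmor C D) : Prop :=
  [/\ (forall i, i <= d.+1 -> is_hom (f i)),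
      (forall i c, i <= d -> f i.+1 (dif C i c) = dif D i (f i c))
    & (forall i c a, i <= d -> f i (act C i c a) = act D i (f i c) (f d.+1 a))].

Definition prod_rcc (d : nat) (H G : rcc d) : rcc d :=
  @RCC d (fun i => prod_group (grp H i) (grp G i))
         (fun i x => (dif H i x.1, dif G i x.2))
         (fun i x a => (act H i x.1 a.1, act G i x.2 a.2)).

Definition diag (d : nat) (Q H G : rcc d) (p : rmor Q H) (f : rmor Q G)
  : rmor Q (prod_rcc H G) := fun i x => (p i x, f i x).

Definition kerP (A B : group) (f : A -> B) : A -> Prop := fun x => f x = gone.
Definition imP (A B : group) (f : A -> B) : B -> Prop := fun y => exists x, f x = y.

Definition coset_eq (G : group) (I : G -> Prop) (x y : G) : Prop :=
  I (gmul x (ginv y)).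

(* g : A -> B induces a bijection  Ka/Ia -> Kb/Ib  (Ia ⊆ Ka, Ib ⊆ Kb);
   for homomorphisms this is the statement that the induced
   homomorphism of quotient groups is an isomorphism. *)
Definition induces_bij (A B : group) (Ka Ia : A -> Prop) (Kb Ib : B -> Prop)
  (g : A -> B) : Prop :=
  (forall y, Kb y -> exists x, Ka x /\ coset_eq Ib (g x) y) /\
  (forall x x', Ka x -> Ka x' -> coset_eq Ib (g x) (g x') -> coset_eq Ia x x').

(* f induces isomorphisms on all π_k, 1 <= k <= n (n = d+2):
   π_n = ker ∂_n (index 0);
   π_k = ker ∂_k / ∂_(k+1)(C_(k+1)), 2 <= k <= n-1 (index i.+1, i < d);
   π_1 = C_1 / ∂_2(C_2) (index d.+1). *)
Definition is_weq (d : nat) (C D : rcc d) (f : rmor C D) : Prop :=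
  [/\ induces_bij (kerP (dif C 0)) (fun x => x = gone)
                  (kerP (dif D 0)) (fun y => y = gone) (f 0),
      (forall i, i < d ->
         induces_bij (kerP (dif C i.+1)) (imP (dif C i))
                     (kerP (dif D i.+1)) (imP (dif D i)) (f i.+1))
    & induces_bij (fun _ => True) (imP (dif C d))
                  (fun _ => True) (imP (dif D d)) (f d.+1)].

Definition is_fib (d : nat) (C D : rcc d) (p : rmor C D) : Prop :=
  forall i, i <= d.+1 -> forall y : grp D i, exists x, p i x = y.

Definition is_triv_fib (d : nat) (C D : rcc d) (p : rmor C D) : Prop :=
  is_rmor p /\ is_fib p /\ is_weq p.

(* The n-pushout, for n = m + 3 (i.e. d = m + 1).                      *)
(* Indices: 0 ~ degree n, 1 ~ degree n-1, 2 ~ degree n-2, m.+2 ~ C_1.  *)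

Unset Implicit Arguments.
Section Pushout.
Variables (m : nat) (Q K : rcc m.+1) (nab : rmor Q K).

(* action of Q_(n-1) on K_n used in the semidirect product:
   for n = 3, via ∇_1 ∘ ξ_2 and the K_1-action; for n >= 4, trivial *)
Definition sd_act : grp Q 1 -> grp K 0 -> grp K 0 :=
  (match m as m0 return
     forall (Q' K' : rcc m0.+1), rmor Q' K' -> grp Q' 1 -> grp K' 0 -> grp K' 0
   with
   | 0 => fun Q' K' nab' a k => act K' 0 k (nab' 2 (dif Q' 1 a))
   | _.+1 => fun _ _ _ _ k => k
   end) Q K nab.

Definition sd_group : group :=
  @Group (grp Q 1 * grp K 0)%type
    (fun x y => (gmul x.1 y.1, gmul (sd_act y.1 x.2) y.2))
    (gone, gone)
    (fun x => (ginv x.1, sd_act (ginv x.1) (ginv x.2))).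

Definition po_gens : sd_group -> Prop :=
  fun z => exists x : grp Q 0, z = (ginv (dif Q 0 x), nab 0 x).

Definition po_N : sd_group -> Prop := normal_closure po_gens.

(* P = Q_(n-1) ×^(Q_n) K_n ; its elements qcls (a,k) are written [a,k] *)
Definition po_P : group := quot_group po_N.

Definition po_grp (i : nat) : group :=
  match i with
  | 0 => grp K 0
  | 1 => po_P
  | i'.+2 => grp Q i'.+2
  end.

Definition po_dif (i : nat) : po_grp i -> po_grp i.+1 :=
  match i as i0 return po_grp i0 -> po_grp i0.+1 with
  | 0 => fun k => qcls po_N (gone, k)
  | 1 => fun c => dif Q 1 (qrepr c).1
  | i'.+2 => dif Q i'.+2
  end.

Definition po_act (i : nat) : po_grp i -> grp Q m.+2 -> po_grp i :=
  match i as i0 return po_grp i0 -> grp Q m.+2 -> po_grp i0 with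
  | 0 => fun k a => act K 0 k (nab m.+2 a)
  | 1 => fun c a => qcls po_N (act Q 1 (qrepr c).1 a,
                               act K 0 (qrepr c).2 (nab m.+2 a))
  | i'.+2 => fun c a => act Q i'.+2 c a
  end.

Definition pushout : rcc m.+1 := @RCC m.+1 po_grp po_dif po_act.

Definition po_iota : rmor Q pushout :=
  fun i => match i as i0 return grp Q i0 -> po_grp i0 with
           | 0 => nab 0
           | 1 => fun a => qcls po_N (a, gone)
           | i'.+2 => fun x => x
           end.

End Pushout.

Arguments pushout {m Q K} nab.
Arguments po_iota {m Q K} nab i _.

(* Main.v *)
Require Import Defs.
From Stdlib Require Import FunctionalExtensionality PropExtensionality ProofIrrelevance ClassicalEpsilon.
From mathcomp Require Import ssreflect ssrfun ssrbool eqtype ssrnat.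
From Stdlib Require Import FunctionalExtensionality PropExtensionality ProofIrrelevance ClassicalEpsilon.

Set Implicit Arguments.
Section GL.
Lemma gA (G : group) : is_group G -> forall x y z : G, gmul x (gmul y z) = gmul (gmul x y) z.
Proof. by case. Qed.
Lemma g1l (G : group) : is_group G -> forall x : G, gmul gone x = x.
Proof. by case. Qed.
Lemma g1r (G : group) : is_group G -> forall x : G, gmul x gone = x.
Proof. by case. Qed.
Lemma gVl (G : group) : is_group G -> forall x : G, gmul (ginv x) x = gone.
Proof. by case. Qed.
Lemma gVr (G : group) : is_group G -> forall x : G, gmul x (ginv x) = gone.
Proof. by case. Qed.
Lemma gKl (G : group) (hG : is_group G) (x y : G) : gmul (ginv x) (gmul x y) = y.
Proof. by rewrite (gA hG) (gVl hG) (g1l hG). Qed.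
Lemma gKr (G : group) (hG : is_group G) (x y : G) : gmul x (gmul (ginv x) y) = y.
Proof. by rewrite (gA hG) (gVr hG) (g1l hG). Qed.
Lemma gcancel (G : group) (hG : is_group G) (x y z : G) : gmul x y = gmul x z -> y = z.
Proof. by move/(f_equal (gmul (ginv x))); rewrite !(gKl hG). Qed.
Lemma ginv_uniq (G : group) (hG : is_group G) (x y : G) : gmul x y = gone -> y = ginv x.
Proof. by move=> E; rewrite -(gKl hG x y) E (g1r hG). Qed.
Lemma g_eq_div (G : group) (hG : is_group G) (x y : G) : gmul x (ginv y) = gone -> x = y.
Proof. by move=> E; rewrite -(g1r hG x) -(gVl hG y) (gA hG) E (g1l hG). Qed.
Lemma g_eq_ldiv (G : group) (hG : is_group G) (x y : G) : gmul (ginv x) y = gone -> x = y.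
Proof. by move=> E; rewrite -(gKr hG x y) E (g1r hG). Qed.
Lemma ginvK (G : group) (hG : is_group G) (x : G) : ginv (ginv x) = x.
Proof. by rewrite -(ginv_uniq hG _ _ (gVl hG x)). Qed.
Lemma ginv1 (G : group) (hG : is_group G) : ginv (@gone G) = gone.
Proof. by rewrite -(ginv_uniq hG _ _ (g1l hG gone)). Qed.
Lemma ginvM (G : group) (hG : is_group G) (x y : G) :
  ginv (gmul x y) = gmul (ginv y) (ginv x).
Proof. symmetry; apply: (@ginv_uniq G hG (gmul x y)). 
by rewrite -(gA hG) (gA hG y) (gVr hG) (g1l hG) (gVr hG). Qed.
Lemma ginv_inj (G : group) (hG : is_group G) (x y : G) : ginv x = ginv y -> x = y.
Proof. by move=> E; rewrite -(ginvK hG x) E (ginvK hG). Qed.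
Lemma idem_one (G : group) (hG : is_group G) (x : G) : gmul x x = x -> x = gone.
Proof. by move=> E; apply: (gcancel hG x); rewrite E (g1r hG). Qed.
Lemma hom1 (A B : group) (hA : is_group A) (hB : is_group B) (f : A -> B) :
  is_hom f -> f gone = gone.
Proof. by move=> hf; apply: (idem_one hB); rewrite -hf (g1l hA). Qed.
Lemma homV (A B : group) (hA : is_group A) (hB : is_group B) (f : A -> B) :
  is_hom f -> forall x, f (ginv x) = ginv (f x).
Proof. by move=> hf x; apply: (@ginv_uniq B hB); rewrite -hf (gVr hA) (hom1 hA hB hf). Qed.
End GL.

Lemma prod_is_group (G H : group) : is_group G -> is_group H -> is_group (prod_group G H).
Proof.
move=> hG hH; split => /=.
- by move=> [x1 x2] [y1 y2] [z1 z2] /=; rewrite (gA hG) (gA hH).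
- by move=> [x1 x2] /=; rewrite (g1l hG) (g1l hH).
- by move=> [x1 x2] /=; rewrite (g1r hG) (g1r hH).
- by move=> [x1 x2] /=; rewrite (gVl hG) (gVl hH).
- by move=> [x1 x2] /=; rewrite (gVr hG) (gVr hH).
Qed.

Definition sdg {A B : group} (s : A -> B -> B) : group :=
  @Group (A * B)%type (fun x y => (gmul x.1 y.1, gmul (s y.1 x.2) y.2)) (gone, gone)
    (fun x => (ginv x.1, s (ginv x.1) (ginv x.2))).

Definition sd_ok {A B : group} (s : A -> B -> B) : Prop :=
  [/\ forall a, is_hom (s a), forall k, s gone k = k
    & forall a a' k, s (gmul a a') k = s a' (s a k)].

Lemma sd1 (A B : group) (hB : is_group B) (s : A -> B -> B) : sd_ok s -> forall a : A, s a gone = gone.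
Proof. by case=> h _ _ a; apply: (hom1 hB hB). Qed.
Lemma sdV (A B : group) (hB : is_group B) (s : A -> B -> B) : sd_ok s -> forall (a : A) k, s a (ginv k) = ginv (s a k).
Proof. by case=> h _ _ a; apply: (homV hB hB). Qed.

Lemma sdg_group (A B : group) (hA : is_group A) (hB : is_group B) (s : A -> B -> B) :
  sd_ok s -> is_group (sdg s).
Proof.
move=> hs; have [h1 h2 h3] := hs.
split => /=.
- move=> [x1 x2] [y1 y2] [z1 z2] /=; rewrite (gA hA) h3 h1 (gA hB) //.
- by move=> [x1 x2] /=; rewrite (g1l hA) (sd1 hB hs) (g1l hB).
- by move=> [x1 x2] /=; rewrite (g1r hA) h2 (g1r hB).
- by move=> [x1 x2] /=; rewrite (gVl hA) -h3 (gVl hA) h2 (gVl hB).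
- by move=> [x1 x2] /=; rewrite (gVr hA) -h1 (gVr hB) (sd1 hB hs).
Qed.

Lemma sig_eq_pi (U : Type) (P : U -> Prop) (p q : {x | P x}) :
  proj1_sig p = proj1_sig q -> p = q.
Proof. case: p q => [x px] [y py] /= E; subst y; by rewrite (proof_irrelevance _ px py). Qed.

Lemma nsg1 (G : group) (N : G -> Prop) : is_normal_subgroup N -> N gone. Proof. by case. Qed.
Lemma nsgM (G : group) (N : G -> Prop) : is_normal_subgroup N -> forall {x y}, N x -> N y -> N (gmul x y).
Proof. by case. Qed.
Lemma nsgV (G : group) (N : G -> Prop) : is_normal_subgroup N -> forall {x}, N x -> N (ginv x).
Proof. by case. Qed.
Lemma nsgJ (G : group) (N : G -> Prop) : is_normal_subgroup N -> forall {x} g, N x -> N (gmul (ginv g) (gmul x g)).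
Proof. by case. Qed.

Lemma qcls_eq (G : group) (hG : is_group G) (N : G -> Prop) (hN : is_normal_subgroup N) (x y : G) :
  qcls N x = qcls N y <-> N (gmul (ginv x) y).
Proof.
split.
- move/(f_equal (@proj1_sig _ _)) => /= E.
  have : qrel N y y by rewrite /qrel (gVl hG); apply: nsg1.
  by rewrite -E.
- move=> Hxy; apply: sig_eq_pi => /=.
  apply: functional_extensionality => w; apply: propositional_extensionality.
  rewrite /qrel; split => H.
  + have := nsgM hN (nsgV hN Hxy) H.
    by rewrite (ginvM hG) (ginvK hG) -(gA hG) (gKr hG).
  + have := nsgM hN Hxy H.
    by rewrite -(gA hG) (gKr hG).
Qed.

Lemma qcls_repr (G : group) (N : G -> Prop) (c : qcar N) : qcls N (qrepr c) = c.
Proof.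
apply: sig_eq_pi => /=; rewrite /qrepr.
by case: (constructive_indefinite_description _ _) => r /= ->.
Qed.

Lemma qmul (G : group) (hG : is_group G) (N : G -> Prop) (hN : is_normal_subgroup N) (x y : G) :
  @gmul (quot_group N) (qcls N x) (qcls N y) = qcls N (gmul x y).
Proof.
rewrite /=.
move: (qcls_repr (qcls N x)) (qcls_repr (qcls N y)).
move: (qrepr (qcls N x)) (qrepr (qcls N y)) => r1 r2.
move=> /(qcls_eq hG hN) H1 /(qcls_eq hG hN) H2; apply/(qcls_eq hG hN).
have := nsgM hN (nsgJ hN r2 H1) H2.
by rewrite (ginvM hG) -!(gA hG) (gKr hG).
Qed.

Lemma qinv (G : group) (hG : is_group G) (N : G -> Prop) (hN : is_normal_subgroup N) (x : G) :
  @ginv (quot_group N) (qcls N x) = qcls N (ginv x).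
Proof.
rewrite /=.
move: (qcls_repr (qcls N x)); move: (qrepr (qcls N x)) => r.
move=> /(qcls_eq hG hN) H1; apply/(qcls_eq hG hN).
have := nsgJ hN (ginv x) (nsgV hN H1).
rewrite (ginvK hG) (ginvK hG) (ginvM hG) (ginvK hG) -!(gA hG).
by rewrite (gKr hG).
Qed.

Lemma qcls1 (G : group) (hG : is_group G) (N : G -> Prop) (hN : is_normal_subgroup N) (x : G) :
  qcls N x = qcls N gone <-> N x.
Proof.
rewrite (qcls_eq hG hN) (g1r hG); split => H.
- by rewrite -(ginvK hG x); apply: nsgV.
- by apply: nsgV.
Qed.

Lemma nc_normal (G : group) (S : G -> Prop) : is_normal_subgroup (normal_closure S).
Proof.
split.
- by move=> M hM _; apply: nsg1.
- by move=> x y Hx Hy M hM hS; apply: nsgM => //; [apply: Hx | apply: Hy].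
- by move=> x Hx M hM hS; apply: nsgV => //; apply: Hx.
- by move=> x g Hx M hM hS; apply: nsgJ => //; apply: Hx.
Qed.

Lemma nc_self (G : group) (S : G -> Prop) : is_normal_subgroup S ->
  forall z, normal_closure S z <-> S z.
Proof. by move=> hS z; split => [H | H M hM hSM]; [apply: H | apply: hSM]. Qed.

Lemma actM d (C : rcc d) (hC : is_rcc C) i a (hi : i <= d) x y :
  act C i (gmul x y) a = gmul (act C i x a) (act C i y a).
Proof. exact: (rcc_act_hom hC a hi x y). Qed.

Lemma prod_is_rcc d (H G : rcc d) : is_rcc H -> is_rcc G -> is_rcc (prod_rcc H G).
Proof.
move=> hH hG; split.
- move=> i hi; apply: prod_is_group; [exact: rcc_group hH i hi | exact: rcc_group hG i hi].
- by move=> i hi [x1 x2] [y1 y2] /=; rewrite (rcc_dif_hom hH hi) (rcc_dif_hom hG hi).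
- by move=> i [a1 a2] hi [x1 x2] [y1 y2] /=; rewrite (actM hH i a1 hi) (actM hG i a2 hi).
- by move=> i [x1 x2] hi /=; rewrite (rcc_act_one hH x1 hi) (rcc_act_one hG x2 hi).
- by move=> i [x1 x2] [a1 a2] [b1 b2] hi /=; rewrite (rcc_act_mul hH x1 a1 b1 hi) (rcc_act_mul hG x2 a2 b2 hi).
- by move=> [x1 x2] [a1 a2] /=; rewrite (rcc_xmod_equiv hH) (rcc_xmod_equiv hG).
- by move=> [x1 x2] [a1 a2] /=; rewrite (rcc_xmod_peiffer hH) (rcc_xmod_peiffer hG).
- by move=> i hi [x1 x2] [a1 a2] /=; rewrite (rcc_abelian hH hi) (rcc_abelian hG hi).
- by move=> i [x1 x2] [a1 a2] hi /=; rewrite (rcc_dif_equiv hH x1 a1 hi) (rcc_dif_equiv hG x2 a2 hi).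
- by move=> i [x1 x2] hi /=; rewrite (rcc_difdif hH x1 hi) (rcc_difdif hG x2 hi).
- by move=> i [x1 x2] [a1 a2] hi /=; rewrite (rcc_triv_act hH x1 a1 hi) (rcc_triv_act hG x2 a2 hi).
Qed.

Lemma diag_rmor d (Q H G : rcc d) (p : rmor Q H) (f : rmor Q G) :
  is_rmor p -> is_rmor f -> is_rmor (diag p f).
Proof.
case=> p1 p2 p3 [f1 f2 f3]; split; rewrite /diag /=.
- by move=> i hi x y; rewrite (p1 i hi) (f1 i hi).
- by move=> i c hi; rewrite (p2 i c hi) (f2 i c hi).
- by move=> i c a hi; rewrite (p3 i c a hi) (f3 i c a hi).
Qed.

Lemma sd_ok_po m (Q K : rcc m.+1) (nab : rmor Q K) : is_rcc Q -> is_rcc K -> is_rmor nab ->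
  sd_ok (sd_act m Q K nab).
Proof.
case: m Q K nab => [|m] Q K nab hQ hK [hn1 hn2 hn3]; split => /=.
- by move=> a x y; apply: (actM hK 0 _ isT).
- move=> k.
  rewrite (hom1 (rcc_group hQ (i:=1) isT) (rcc_group hQ (i:=2) isT) (rcc_dif_hom hQ (i:=1) isT)).
  rewrite (hom1 (rcc_group hQ (i:=2) isT) (rcc_group hK (i:=2) isT) (hn1 2 isT)).
  exact: (rcc_act_one hK (i:=0) k isT).
- move=> a a' k.
  by rewrite (rcc_dif_hom hQ (i:=1) isT) (hn1 2 isT) (rcc_act_mul hK (i:=0) _ _ _ isT).
- by [].
- by [].
- by [].
Qed.

Lemma sd_triv m (Q K : rcc m.+1) (nab : rmor Q K) : is_rcc Q -> is_rcc K -> is_rmor nab ->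
  forall y k, sd_act m Q K nab (dif Q 0 y) k = k.
Proof.
case: m Q K nab => [|m] Q K nab hQ hK [hn1 hn2 hn3] y k //=.
rewrite (rcc_difdif hQ (i:=0) y isT).
rewrite (hom1 (rcc_group hQ (i:=2) isT) (rcc_group hK (i:=2) isT) (hn1 2 isT)).
exact: (rcc_act_one hK (i:=0) k isT).
Qed.

Lemma sd_is_group m (Q K : rcc m.+1) (nab : rmor Q K) : is_rcc Q -> is_rcc K -> is_rmor nab ->
  is_group (sd_group m Q K nab).
Proof.
move=> hQ hK hn.
exact: (sdg_group (rcc_group hQ (i:=1) isT) (rcc_group hK (i:=0) isT) (sd_ok_po hQ hK hn)).
Qed.

Lemma sdg_conj (A B : group) (hA : is_group A) (hB : is_group B) (s : A -> B -> B) :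
  sd_ok s -> is_abelian B -> forall (a b : A) (k c : B), (forall k, s b k = k) ->
  @gmul (sdg s) (@ginv (sdg s) (a, k)) (@gmul (sdg s) (b, c) (a, k)) = (gmul (ginv a) (gmul b a), s a c).
Proof.
move=> [h1 h2 h3] hAb a b k c hb /=.
by rewrite h3 hb -h3 (gVl hA) h2 (hAb (s a c) k) (gKl hB).
Qed.

Lemma po_gens_normal m (Q K : rcc m.+1) (nab : rmor Q K) : is_rcc Q -> is_rcc K -> is_rmor nab ->
  is_normal_subgroup (po_gens m Q K nab).
Proof.
move=> hQ hK hn.
have hQ0 := rcc_group hQ (i:=0) isT; have hQ1 := rcc_group hQ (i:=1) isT.
have hK0 := rcc_group hK (i:=0) isT.
have hd0 : is_hom (dif Q 0) := rcc_dif_hom hQ (i:=0) isT.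
have hn0 : is_hom (nab 0) by case: hn => h _ _; exact: h 0 isT.
have hs := sd_ok_po hQ hK hn.
have ht := sd_triv hQ hK hn.
split.
- exists gone; rewrite (hom1 hQ0 hQ1 hd0) (ginv1 hQ1) (hom1 hQ0 hK0 hn0) //.
- move=> _ _ [x ->] [y ->] /=; exists (gmul y x).
  rewrite hd0 hn0 (ginvM hQ1) -!(homV hQ0 hQ1 hd0) ht.
  by rewrite (rcc_abelian hK (i:=0) isT (nab 0 x)).
- move=> _ [x ->] /=; exists (ginv x).
  by rewrite (ginvK hQ1) ht (homV hQ0 hK0 hn0) (homV hQ0 hQ1 hd0) (ginvK hQ1).
- move=> _ [a k] [x ->].
  rewrite -(homV hQ0 hQ1 hd0).
  rewrite (sdg_conj hQ1 hK0 hs (rcc_abelian hK (i:=0) isT) a _ k _ (ht (ginv x))).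
  rewrite (homV hQ0 hQ1 hd0).
  case: m Q K nab hQ hK hn hQ0 hQ1 hK0 hd0 hn0 hs ht a k x =>
    [|m] Q K nab hQ hK hn hQ0 hQ1 hK0 hd0 hn0 hs ht a k x /=.
  + exists (act Q 0 x (dif Q 1 a)).
    case: hn => _ _ hn3.
    rewrite (hn3 0 x _ isT) (rcc_dif_equiv hQ (i:=0) x _ isT) (rcc_xmod_peiffer hQ).
    by rewrite !(ginvM hQ1) (ginvK hQ1) !(gA hQ1).
  + exists x.
    by rewrite (rcc_abelian hQ (i:=1) isT (ginv (dif Q 0 x)) a) (gKl hQ1).
Qed.

Lemma id_bij (G : group) (hG : is_group G) (Ka Ia Ib : G -> Prop) :
  (forall z, Ia z <-> Ib z) -> Ia gone ->
  induces_bij Ka Ia Ka Ib (fun x => x).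
Proof.
move=> hI h1; split.
- by move=> y Hy; exists y; split => //; rewrite /coset_eq (gVr hG) -hI.
- by move=> x x' _ _; rewrite /coset_eq hI.
Qed.

Lemma imD m (Q K : rcc m.+1) (nab : rmor Q K) :
  is_rcc Q -> is_rcc K -> is_rmor nab ->
  forall j (z : grp Q j.+2), imP (dif (pushout nab) j.+1) z <-> imP (dif Q j.+1) z.
Proof.
move=> hQ hK hn.
have hS := sd_is_group hQ hK hn.
have hN : is_normal_subgroup (po_N m Q K nab) := nc_normal _ _.
have hNg : forall z, po_N m Q K nab z <-> po_gens m Q K nab z :=
  nc_self (po_gens_normal hQ hK hn).
case=> [|j] z; last by [].
have hQ0 := rcc_group hQ (i:=0) isT; have hQ1 := rcc_group hQ (i:=1) isT.
have hQ2 := rcc_group hQ (i:=2) isT.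
have hd1 : is_hom (dif Q 1) := rcc_dif_hom hQ (i:=1) isT.
split.
- by case=> c <-; exists (qrepr c).1.
- case=> a <-; exists (qcls (po_N m Q K nab) (a, gone)) => /=.
  move: (qcls_repr (qcls (po_N m Q K nab) (a, gone))).
  case: (qrepr _) => r1 r2 /(qcls_eq hS hN) /hNg [y] /= [E1 _].
  apply: (g_eq_ldiv hQ2).
  rewrite -(homV hQ1 hQ2 hd1) -hd1 E1 (homV hQ1 hQ2 hd1) (rcc_difdif hQ (i:=0) y isT).
  exact: ginv1 hQ2.
Qed.

Lemma po_weq m (Q K : rcc m.+1) (nab : rmor Q K) :
  is_rcc Q -> is_rcc K -> is_rmor nab ->
  (forall x x', dif Q 0 x = gone -> dif Q 0 x' = gone -> nab 0 x = nab 0 x' -> x = x') ->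
  is_weq (po_iota nab).
Proof.
move=> hQ hK hn hinj.
have hS := sd_is_group hQ hK hn.
have hN : is_normal_subgroup (po_N m Q K nab) := nc_normal _ _.
have hNg : forall z, po_N m Q K nab z <-> po_gens m Q K nab z :=
  nc_self (po_gens_normal hQ hK hn).
have hQ0 := rcc_group hQ (i:=0) isT; have hQ1 := rcc_group hQ (i:=1) isT.
have hK0 := rcc_group hK (i:=0) isT.
have hd0 : is_hom (dif Q 0) := rcc_dif_hom hQ (i:=0) isT.
have hs := sd_ok_po hQ hK hn.
split.
- split.
  + move=> y Hy. rewrite /kerP /= in Hy.
    move/(qcls1 hS hN)/hNg: Hy => [x [E1 E2]].
    exists x; split.
    * by apply: (ginv_inj hQ1); rewrite -E1 (ginv1 hQ1).
    * by rewrite /coset_eq /= E2 (gVr hK0).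
  + move=> x x' Hx Hx'; rewrite /coset_eq /= => E.
    by rewrite (hinj x x' Hx Hx' (g_eq_div hK0 _ _ E)) (gVr hQ0).
- move=> [|i] hi.
  + split.
    * move=> c Hc /=.
      have Ec := qcls_repr c.
      move: Hc Ec; rewrite /kerP /=.
      case: (qrepr c) => a k0 /= Hc Ec.
      exists a; split => //.
      rewrite -Ec /coset_eq (qinv hS hN) (qmul hS hN).
      exists (sd_act m Q K nab (ginv a) (ginv k0)).
      congr (qcls _ _) => /=.
      by rewrite (gVr hQ1) (sd1 hK0 hs) (g1l hK0).
    * move=> a a' /= Ha Ha'.
      rewrite /coset_eq (qinv hS hN) (qmul hS hN).
      case=> k /(qcls_eq hS hN) /hNg [y] /= [E1 _].
      exists (ginv y).
      by rewrite (homV hQ0 hQ1 hd0) -E1 (ginv1 hQ1) (g1l hQ1).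
  + have hQi := rcc_group hQ (i:=i.+2) (leqW hi).
    apply: (id_bij hQi); first by move=> z; symmetry; apply: (imD hQ hK hn).
    by exists gone; apply: (hom1 (rcc_group hQ (i:=i.+1) (leqW (ltnW hi))) hQi (rcc_dif_hom hQ (i:=i.+1) (ltnW hi))).
- have hQi := rcc_group hQ (i:=m.+2) (leqnn _).
  apply: (id_bij hQi); first by move=> z; symmetry; apply: (imD hQ hK hn).
  by exists gone; apply: (hom1 (rcc_group hQ (i:=m.+1) (leqnSn _)) hQi (rcc_dif_hom hQ (i:=m.+1) (leqnn _))).
Qed.
Unset Implicit Arguments.

Theorem mainTheorem1 (m : nat) (Q H G : rcc m.+1)
    (p : rmor Q H) (f : rmor Q G) :
  is_rcc Q -> is_rcc H -> is_rcc G ->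
  is_triv_fib p -> is_rmor f ->
  is_weq (po_iota (diag p f)).
Proof.
move=> hQ hH hG [hp [_ [[_ hpinj] _ _]]] hf.
apply: (po_weq hQ (prod_is_rcc hH hG) (diag_rmor hp hf)).
move=> x x' Hx Hx' E.
have E0 : p 0 x = p 0 x' by move: E; rewrite /diag => -[].
apply: (g_eq_div (rcc_group hQ (i:=0) isT)).
apply: (hpinj x x' Hx Hx').
by rewrite /coset_eq E0 (gVr (rcc_group hH (i:=0) isT)).
Qed.
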